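(* Let $A,B$ be nonempty persistence diagrams, $\Theta(c)=d_\infty(cA,B)$, and let $a^{(m)}=(a^{(m)}_x,a^{(m)}_y)$ be a point of $\chi(A)$ with the largest $y$-coordinate among points of $\chi(A)$. If $$c\ge \max\Big\{\frac{2\,\mathrm{bd}(B)}{a^{(m)}_x+a^{(m)}_y},\ \frac{\mathrm{pers}(B)}{\mathrm{pers}(A)}\Big\},$$ then $\Theta(c)=c\cdot\mathrm{pers}(A)$.
   Context: A persistence diagram is a finite multiset of points $a=(a_x,a_y)$ with $0\le a_x<a_y<\infty$ together with the diagonal $\Delta$ of infinite multiplicity; nonempty means it has at least one such point. $d_\infty$ is the bottleneck distance (infimum over multi-bijections between $A\cup\Delta$ and $B\cup\Delta$ of the maximal $\ell^\infty$ distance; matching $a$ to $\Delta$ costs $\mathrm{pers}(a)$). $cA=\{(ca_x,ca_y)\}$ for $c>0$. $\mathrm{pers}(a)=(a_y-a_x)/2$; $\mathrm{pers}(A)=\max_{a\in A}\mathrm{pers}(a)$; $\chi(A)$ is the multiset of points of $A$ with persistence equal to $\mathrm{pers}(A)$; $\mathrm{bd}(A)=\max_{a\in A}a_y$. *)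

(* Defs.v *)
From HB Require Import structures.
From mathcomp Require Import all_boot all_order all_algebra.
From mathcomp Require Import classical_sets reals.
Set Implicit Arguments. Unset Strict Implicit. Unset Printing Implicit Defensive.
Import Order.TTheory GRing.Theory Num.Theory.
Local Open Scope ring_scope.
Local Open Scope classical_set_scope.

Section PD.
Variable R : realType.

(* A persistence diagram: finite multiset (list) of off-diagonal points
   (a_x, a_y) with 0 <= a_x < a_y. The diagonal is implicit. *)
Definition is_diagram (A : seq (R * R)) : bool :=
  all (fun a => (0 <= a.1) && (a.1 < a.2)) A.

Definition pers (a : R * R) : R := (a.2 - a.1) / 2.

(* pers(A) = max persistence (A nonempty, all persistences > 0). *)
Definition persD (A : seq (R * R)) : R := \big[Num.max/0]_(a <- A) pers a.

Definition bd (A : seq (R * R)) : R := \big[Num.max/0]_(a <- A) a.2.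

Definition scaleD (c : R) (A : seq (R * R)) : seq (R * R) :=
  map (fun a => (c * a.1, c * a.2)) A.

Definition linf (a b : R * R) : R := Num.max `|a.1 - b.1| `|a.2 - b.2|.

(* A multi-bijection between A u Delta and B u Delta, up to the diagonal-to-
   diagonal part (cost 0), is a partial matching: an injective partial map
   from the points of A to the points of B; unmatched points are sent to
   the diagonal at cost pers. *)
Definition pmatching (A B : seq (R * R)) := {ffun 'I_(size A) -> option 'I_(size B)}.

Definition is_partial_bij A B (f : pmatching A B) : Prop :=
  forall i i' j, f i = Some j -> f i' = Some j -> i = i'.

Definition matching_cost A B (f : pmatching A B) : R :=
  Num.max
    (\big[Num.max/0]_(i < size A)
        match f i with
        | Some j => linf (nth (0,0) A i) (nth (0,0) B j)
        | None => pers (nth (0,0) A i)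
        end)
    (\big[Num.max/0]_(j < size B | [forall i, f i != Some j])
        pers (nth (0,0) B j)).

Definition bottleneck (A B : seq (R * R)) : R :=
  inf [set r | exists f : pmatching A B, is_partial_bij f /\ r = matching_cost f].

End PD.

(* Main.v *)
Require Import Defs.
From HB Require Import structures.
From mathcomp Require Import all_boot all_order all_algebra.
From mathcomp Require Import classical_sets reals.
From mathcomp Require Import ring lra.
Import Order.TTheory GRing.Theory Num.Theory.
Local Open Scope ring_scope.

Lemma persD_ub (R : realType) (A : seq (R * R)) a : a \in A -> pers a <= persD A.
Proof. by move=> aA; rewrite /persD; exact: (le_bigmax_seq _ _ _ _ aA). Qed.

Lemma bd_ub (R : realType) (A : seq (R * R)) a : a \in A -> a.2 <= bd A.
Proof. by move=> aA; rewrite /bd; exact: (le_bigmax_seq _ _ _ _ aA). Qed.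

Theorem mainTheorem7 (R : realType) (A B : seq (R * R)) (am : R * R) (c : R) :
  is_diagram A -> is_diagram B -> A != [::] -> B != [::] ->
  (* am is a point of chi(A) with the largest y-coordinate among chi(A) *)
  am \in A -> pers am = persD A ->
  (forall b, b \in A -> pers b = persD A -> b.2 <= am.2) ->
  0 < c ->
  Num.max (2 * bd B / (am.1 + am.2)) (persD B / persD A) <= c ->
  bottleneck (scaleD c A) B = c * persD A.
Proof.
move=> dA dB _ _ amA Pam _ c0 hc.
have [am1 am12] : 0 <= am.1 /\ am.1 < am.2 by move/allP: dA => /(_ _ amA) /andP.
have Ppos : 0 < persD A by rewrite -Pam /pers; lra.
have sum0 : 0 < am.1 + am.2 by lra.
move: hc; rewrite ge_max => /andP[h1 h2].
rewrite ler_pdivrMr // in h1.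
rewrite ler_pdivrMr // in h2.
set A' := scaleD c A.
have sA : size A' = size A by rewrite size_map.
have nA i : (i < size A)%N -> nth (0,0) A' i = (c * (nth (0,0) A i).1, c * (nth (0,0) A i).2).
  by move=> hi; rewrite /A' /scaleD (nth_map (0,0)).
have persc a : pers (c * a.1, c * a.2) = c * pers a by rewrite /pers /=; field.
have lb : forall f : pmatching A' B, c * persD A <= matching_cost f.
  move=> f; rewrite /matching_cost le_max; apply/orP; left.
  have hi : (index am A < size A')%N by rewrite sA index_mem.
  apply: le_trans (le_bigmax _ _ (Ordinal hi)).
  rewrite /= nA -?sA // nth_index //.
  case: (f _) => [j|]; last by rewrite persc Pam.
  have jB : nth (0,0) B j \in B by apply: mem_nth.
  have := @bd_ub _ _ _ jB; set b := nth (0,0) B j => hb.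
  rewrite /linf le_max; apply/orP; right => /=.
  rewrite -Pam /pers; apply: le_trans (ler_norm _) ; lra.
set f0 : pmatching A' B := [ffun _ => None].
have f0c : matching_cost f0 <= c * persD A.
  rewrite /matching_cost ge_max; apply/andP; split.
    apply: bigmax_le; first by rewrite mulr_ge0 // ltW.
    move=> i _; rewrite ffunE nA -?sA // persc ler_pM2l //.
    by apply: (@persD_ub _ _ _); apply: mem_nth; rewrite -?sA.
  apply: bigmax_le; first by rewrite mulr_ge0 // ltW.
  move=> j _; apply: le_trans (@persD_ub _ _ _ _) _; first by apply: mem_nth.
  exact: h2.
have f0e : matching_cost f0 = c * persD A by apply/eqP; rewrite eq_le f0c lb.
have mem : [set r | exists f : pmatching A' B, is_partial_bij f /\ r = matching_cost f]%classic (c * persD A).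
  by exists f0; split => // i i' j; rewrite ffunE.
have lbd : lbound [set r | exists f : pmatching A' B, is_partial_bij f /\ r = matching_cost f]%classic (c * persD A).
  by move=> r [f [_ ->]].
apply/eqP; rewrite eq_le; apply/andP; split.
  by apply: ge_inf => //; exists (c * persD A).
by apply: lb_le_inf => //; exists (c * persD A).
Qed.
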